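(* Let $R=(v_1,\dots,v_\ell)$ be a route, $\bar y\in\mathbb{R}^{[N]\times V_+}_{\ge0}$ and $\xi\in[N]$. There exist $f\in\mathbb{R}^A_{\ge0}$ and $g\in\mathbb{R}^{V_+}_{\ge0}$ satisfying $f_{(v_{i-1},v_i)}+d^\xi(v_i)=f_{(v_i,v_{i+1})}+g_{v_i}$ for all $i\in[\ell]$, $f_{(v_{i-1},v_i)}\le C$ for all $i\in[\ell+1]$, and $g_{v_i}\le C\,\bar y^\xi_{v_i}$ for all $i\in[\ell]$, if and only if $$\bar y^\xi(R')\ge\frac{d^\xi(R')}{C}-1\quad\text{for all subroutes } R'\subseteq R.$$
   Context: $G=(V,E)$ complete undirected graph with $V=\{0\}\cup V_+$ ($0$ depot, $V_+$ customers); $D=(V,A)$ replaces each edge by two opposite arcs. Capacity $C\in\mathbb{Q}_{>0}$; scenarios $\xi\in[N]$ with demand vectors $d^\xi\in\mathbb{Q}^{V_+}_{\ge0}$, $d^\xi(v)\le C$. A route $R=(v_1,\dots,v_\ell)$ is the cycle $0,v_1,\dots,v_\ell,0$ through distinct customers, $V_+(R)=\{v_1,\dots,v_\ell\}$, $v_0=v_{\ell+1}=0$. A subroute of $R$ is $R'=(v_i,\dots,v_j)$ with $1\le i\le j\le\ell$. For a vector $f$, $f(S)=\sum_{i\in S}f(i)$; $\bar y^\xi(R')=\sum_{v\in V_+(R')}\bar y^\xi_v$ and $d^\xi(R')=d^\xi(V_+(R'))$. *)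

(* Defs.v *)
From mathcomp Require Import all_boot all_order all_algebra.
Set Implicit Arguments. Unset Strict Implicit. Unset Printing Implicit Defensive.
Import Order.TTheory GRing.Theory Num.Theory.
Local Open Scope ring_scope.

Definition is_route (T : eqType) (depot : T) (r : seq T) : bool :=
  uniq r && all (fun v => v != depot) r.

(* v_i of the route, with v_0 = v_{l+1} = depot (indices 1..l give customers). *)
Definition rvtx (T : Type) (depot : T) (r : seq T) (i : nat) : T :=
  if (1 <= i <= size r)%N then nth depot r i.-1 else depot.

(* Main.v *)
Require Import Defs.
From mathcomp Require Import all_boot all_order all_algebra.
From mathcomp Require Import lra zify.
Import Order.TTheory GRing.Theory Num.Theory.
Set Implicit Arguments. Unset Strict Implicit.
Local Open Scope ring_scope.

Lemma rvtx_in (T : eqType) (depot : T) r i :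
  (1 <= i <= size r)%N -> rvtx depot r i = nth depot r i.-1 /\ rvtx depot r i \in r.
Proof.
move=> Hi; rewrite /rvtx Hi; split => //; apply: mem_nth.
case/andP: Hi; case: i => //= i _; exact.
Qed.

Lemma rvtx_out (T : eqType) (depot : T) r i :
  ~~ (1 <= i <= size r)%N -> rvtx depot r i = depot.
Proof. by rewrite /rvtx => /negbTE ->. Qed.

Lemma rvtx_neq (T : eqType) (depot : T) r i : is_route depot r ->
  (1 <= i <= size r)%N -> rvtx depot r i != depot.
Proof.
case/andP=> _ /allP Ha Hi; have [_ Hin] := rvtx_in depot Hi; exact: Ha.
Qed.

Lemma rvtx_index (T : eqType) (depot : T) r i : is_route depot r ->
  (1 <= i <= size r)%N -> index (rvtx depot r i) r = i.-1.
Proof.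
case/andP=> Hu _ Hi; have [-> _] := rvtx_in depot Hi.
apply: index_uniq => //; case/andP: Hi; case: i => //.
Qed.

Lemma rvtx_succ_neq (T : eqType) (depot : T) r j : is_route depot r ->
  (1 <= j <= size r)%N -> rvtx depot r j != rvtx depot r j.+1.
Proof.
move=> Hr Hj; case: (boolP (j.+1 <= size r)%N) => Hj1.
- have Hj1' : (1 <= j.+1 <= size r)%N by rewrite Hj1.
  have [-> _] := rvtx_in depot Hj; have [-> _] := rvtx_in depot Hj1'.
  case/andP: Hr => Hu _; clear Hj1'; move: Hj Hj1; case: j => // j /andP[_ Hj] Hj1 /=.
  rewrite nth_uniq //; first by rewrite eqn_leq ltnn andbF.
- rewrite (@rvtx_out _ _ _ j.+1); first exact: rvtx_neq.
  by rewrite negb_and Hj1 orbT.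
Qed.


Fixpoint lind (R : realDomainType) (e : nat -> R) (n : nat) : R :=
  match n with
  | 0 => 0
  | k.+1 => if k == 0%N then 0 else
      (if lind e k + e k <= 0 then 0 else lind e k + e k)
  end.

Lemma lind_ge0 (R : realDomainType) (e : nat -> R) n : 0 <= lind e n.
Proof.
elim: n => [|n IH] //=; case: (n == 0%N) => //; case: ifP => // /negbT.
by rewrite -ltNge => /ltW.
Qed.

Lemma lind_S (R : realDomainType) (e : nat -> R) k : (1 <= k)%N ->
  lind e k.+1 = if lind e k + e k <= 0 then 0 else lind e k + e k.
Proof. by case: k. Qed.

Lemma lind_ge (R : realDomainType) (e : nat -> R) k : (1 <= k)%N ->
  lind e k + e k <= lind e k.+1.
Proof.
move=> Hk; rewrite lind_S //; case: ifP => // _.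
Qed.

Lemma lind_bound (R : realDomainType) (e : nat -> R) n : (1 <= n)%N ->
  exists k, (1 <= k <= n)%N /\ lind e n <= \sum_(k <= m < n) e m.
Proof.
elim: n => [//|n IH] _; case: n IH => [|n] IH.
  by exists 1%N; split => //; rewrite big_geq.
have [k [Hk Hb]] := IH isT.
rewrite lind_S //; case: ifP => Hx.
  by exists n.+2; split; [rewrite /= leqnn | rewrite big_geq].
exists k; split; first by case/andP: Hk => -> /= /leqW.
rewrite big_nat_recr /=; last by case/andP: Hk.
by rewrite lerD2r.
Qed.

Theorem lemma2 (R : realFieldType) (T : finType) (depot : T) (N : nat)
    (C : rat) (d : 'I_N -> T -> rat)
    (HC : 0 < C)
    (Hd0 : forall xi v, v != depot -> 0 <= d xi v)
    (HdC : forall xi v, v != depot -> d xi v <= C)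
    (r : seq T) (Hr : is_route depot r)
    (ybar : 'I_N -> T -> R)
    (Hy : forall xi v, v != depot -> 0 <= ybar xi v)
    (xi : 'I_N) :
  (exists (f : T -> T -> R) (g : T -> R),
      (forall u v, u != v -> 0 <= f u v) /\
      (forall v, v != depot -> 0 <= g v) /\
      (forall i, (1 <= i <= size r)%N ->
         f (rvtx depot r i.-1) (rvtx depot r i) + ratr (d xi (rvtx depot r i))
         = f (rvtx depot r i) (rvtx depot r i.+1) + g (rvtx depot r i)) /\
      (forall i, (1 <= i <= (size r).+1)%N ->
         f (rvtx depot r i.-1) (rvtx depot r i) <= ratr C) /\
      (forall i, (1 <= i <= size r)%N ->
         g (rvtx depot r i) <= ratr C * ybar xi (rvtx depot r i)))
  <->
  (forall i j, (1 <= i)%N -> (i <= j)%N -> (j <= size r)%N ->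
     \sum_(i <= k < j.+1) ybar xi (rvtx depot r k)
     >= (\sum_(i <= k < j.+1) ratr (d xi (rvtx depot r k))) / ratr C - 1).
Proof.
have HCR : 0 < ratr C :> R by rewrite ltr0q.
set v := rvtx depot r.
set D := fun k => ratr (d xi (v k)) : R.
set Y := fun k => ybar xi (v k).
split.
- case=> f [g [Hf [Hg [Heq [HfC HgC]]]]] i j Hi Hij Hj.
  set F := fun n => f (v n.-1) (v n).
  have Htel : forall m, (i + m <= (size r).+1)%N ->
      \sum_(i <= k < (i + m)%N) (D k - g (v k)) = F (i + m)%N - F i.
    elim=> [|m IH] Hm. rewrite big_geq ?addn0 //. by rewrite /F ?addn0 subrr.
    rewrite addnS big_nat_recr /=; last by rewrite leq_addr.
    rewrite IH; last by lia.
    have H := Heq (i + m)%N ltac:(lia); rewrite /F /D /=.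
    move: H; rewrite -/v; lra.

  have Hm : (i + (j.+1 - i) = j.+1)%N by rewrite subnKC // ltnW.
  have := Htel (j.+1 - i)%N; rewrite Hm => /(_ Hj) Hs.
  rewrite sumrB in Hs.
  have HF1 : F j.+1 <= ratr C by apply: HfC; lia.
  have HFi : 0 <= F i.
    apply: Hf; case: i Hi Hij {Htel Hs Hm} => // [[|i]] _ Hij /=.
      rewrite /v (@rvtx_out _ _ _ 0) //; rewrite eq_sym; apply: rvtx_neq => //; exact: (leq_trans Hij Hj).
    apply: rvtx_succ_neq => //; exact: ltnW (leq_trans Hij Hj).
  have HG : \sum_(i <= k < j.+1) g (v k) <= ratr C * \sum_(i <= k < j.+1) Y k.
    rewrite mulr_sumr big_nat [X in _ <= X]big_nat; apply: ler_sum => k /andP[H1 H2].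
    apply: HgC; lia.
  rewrite -/D -/Y lerBlDr ler_pdivrMr // mulrDl mul1r [_ * ratr C]mulrC.
  lra.
move=> Hsub.
have Hdep : depot \notin r.
  by apply/negP => Hin; case/andP: Hr => _ /allP /(_ _ Hin); rewrite eqxx.
set e := fun k => D k - ratr C * Y k.
pose F := lind e.
pose f := fun (_ w : T) => if w \in r then F (index w r).+1 else F (size r).+1.
pose g := fun w => if w \in r then
    F (index w r).+1 + D (index w r).+1 - F (index w r).+2 else 0.
have fv : forall u i, (1 <= i <= (size r).+1)%N -> f u (v i) = F i.
  move=> u i Hi; rewrite /f; case: (boolP (i <= size r)%N) => Hil.
    have Hi' : (1 <= i <= size r)%N by rewrite Hil andbT; case/andP: Hi.
    have [_ ->] := rvtx_in depot Hi'; rewrite (rvtx_index Hr Hi').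
    by case: i Hi {Hil Hi'}.
  have Hie : i = (size r).+1 by apply/eqP; rewrite eqn_leq ltnNge Hil andbT; case/andP: Hi.
  by rewrite /v rvtx_out ?(negbTE Hdep) ?Hie // negb_and ltnn orbT.
have gv : forall i, (1 <= i <= size r)%N -> g (v i) = F i + D i - F i.+1.
  move=> i Hi; rewrite /g; have [_ ->] := rvtx_in depot Hi.
  by rewrite (rvtx_index Hr Hi); case: i Hi.
have Dge0 : forall i, (1 <= i <= size r)%N -> 0 <= D i.
  by move=> i Hi; rewrite /D ler0q; apply: Hd0; apply: rvtx_neq.
have Yge0 : forall i, (1 <= i <= size r)%N -> 0 <= Y i.
  by move=> i Hi; rewrite /Y; apply: Hy; apply: rvtx_neq.
exists f, g; split; first by move=> u w _; rewrite /f; case: ifP => _; exact: lind_ge0.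
split.
  move=> w Hw; rewrite /g; case: ifP => // Hin.
  set k := (index w r).+1.
  have Hk : (1 <= k <= size r)%N by rewrite /k ltnS index_mem Hin.
  have H1 := lind_ge0 e k; have H2 := Dge0 k Hk; have H3 := Yge0 k Hk.
  rewrite /F lind_S; last by case/andP: Hk.
  rewrite /e; case: ifP => _; first by lra.
  have : 0 <= ratr C * Y k :> R by apply: mulr_ge0 => //; apply: ltW.
  lra.
split.
  move=> i Hi; rewrite fv; last by case/andP: Hi => -> /= /leqW.
  rewrite fv; last by case/andP: Hi => _ /= H; rewrite ltnS.
  rewrite gv //. 
  by case: i Hi => //= i _; lra.
split.
  move=> i Hi; rewrite fv //.
  have [k [Hk Hb]] := lind_bound e (proj1 (andP Hi)).
  apply: (le_trans Hb).
  case/andP: Hk => Hk1; rewrite leq_eqVlt => /orP[/eqP ->|Hki].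
    by rewrite big_geq //; apply: ltW.
  have Hi1 : i = (i.-1).+1 by move: Hki; clear; case: i.
  have := Hsub k i.-1 Hk1 ltac:(by rewrite -ltnS -Hi1) ltac:(by case/andP: Hi; rewrite Hi1).
  rewrite -Hi1 -/D -/Y lerBlDr ler_pdivrMr // mulrDl mul1r.
  rewrite /e sumrB -mulr_sumr [_ * ratr C]mulrC.
  lra.
move=> i Hi; rewrite gv //.
have := lind_ge e (proj1 (andP Hi)); rewrite /F -/Y {2}/e.
change (ybar xi (v i)) with (Y i).
lra.
Qed.
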